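(* Let $N, M$ be positive integers, let $B=[b_{ij}]$ be a real $N\times M$ matrix and $C=[c_{ij}]$ a real $M\times N$ matrix. Define the ultradiscrete product $B\otimes C$ as the $N\times N$ matrix $$B\otimes C=\Big[\max_{1\le k\le M}(b_{ik}+c_{kj})\Big]_{1\le i,j\le N}.$$ Then $$\mathrm{UP}[B\otimes C]=\max_{1\le j_1\le j_2\le\cdots\le j_N\le M}\Big(\mathrm{UP}[B]^{1\dots N}_{j_1\dots j_N}+\mathrm{UP}[C]^{j_1\dots j_N}_{1\dots N}\Big).$$
   Context: For a real $N\times N$ matrix $A=[a_{ij}]$, the ultradiscrete permanent is $\mathrm{UP}[A]=\max_{\pi}(a_{1\pi_1}+a_{2\pi_2}+\cdots+a_{N\pi_N})$, the maximum over all permutations $\pi=(\pi_1,\dots,\pi_N)$ of $\{1,\dots,N\}$. For indices $1\le j_1\le\cdots\le j_N\le M$ (repetitions allowed), $\mathrm{UP}[B]^{1\dots N}_{j_1\dots j_N}$ denotes the ultradiscrete permanent of the $N\times N$ matrix whose $k$-th column is the $j_k$-th column of $B$ (all rows of $B$ kept), and $\mathrm{UP}[C]^{j_1\dots j_N}_{1\dots N}$ denotes the ultradiscrete permanent of the $N\times N$ matrix whose $k$-th row is the $j_k$-th row of $C$ (all columns of $C$ kept). *)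

(* Defs.v *)
From HB Require Import structures.
From mathcomp Require Import all_boot all_order all_algebra all_fingroup.
Set Implicit Arguments. Unset Strict Implicit. Unset Printing Implicit Defensive.
Import Order.TTheory GRing.Theory Num.Theory.
Local Open Scope ring_scope.

(* Maximum of F over the (finite) set of x : T satisfying P.  When that set
   is nonempty this is the genuine maximum; on the empty set it is 0
   (a junk value never used in the theorem, where all index sets are nonempty). *)
Definition umax (R : realDomainType) (T : finType) (P : pred T) (F : T -> R) : R :=
  match [pick x | P x] with
  | Some x0 => \big[Num.max/F x0]_(x | P x) F x
  | None => 0
  end.

Definition UP (R : realDomainType) (n : nat) (A : 'M[R]_n) : R :=
  umax (fun _ : 'S_n => true) (fun s : 'S_n => \sum_(i < n) A i (s i)).

Definition uprod (R : realDomainType) (N M : nat) (B : 'M[R]_(N, M)) (C : 'M[R]_(M, N))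
  : 'M[R]_N :=
  \matrix_(i < N, j < N) umax (fun _ : 'I_M => true) (fun k => B i k + C k j).

Definition nondecr (N M : nat) (j : {ffun 'I_N -> 'I_M}) : bool :=
  [forall a : 'I_N, forall b : 'I_N, (a <= b)%N ==> (j a <= j b)%N].

(* Main.v *)
Require Import Defs.
From HB Require Import structures.
From mathcomp Require Import all_boot all_order all_algebra all_fingroup.
Import Order.TTheory GRing.Theory Num.Theory.
Local Open Scope ring_scope.
Set Implicit Arguments.
Section U.
Variables (R : realDomainType) (T : finType) (P : pred T) (F : T -> R).

Lemma umax_ub x : P x -> F x <= umax P F.
Proof.
move=> Px; rewrite /umax; case: pickP => [x0 Px0|]; last by move/(_ x); rewrite Px.
exact: le_bigmax_cond.
Qed.

Lemma umax_ex x : P x -> exists2 y, P y & umax P F = F y.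
Proof.
move=> Px; rewrite /umax; case: pickP => [x0 Px0|]; last by move/(_ x); rewrite Px.
apply: (big_ind (fun v => exists2 y, P y & v = F y)).
- by exists x0.
- move=> a b [ya Pa ->] [yb Pb ->]; case: (leP (F ya) (F yb)) => _; [exists yb|exists ya] => //.
- by move=> i Pi; exists i.
Qed.
End U.
Arguments umax_ub {R T P F} x _.
Arguments umax_ex {R T P F} x _.
Lemma sort_fun (N M : nat) (f : {ffun 'I_N -> 'I_M}) :
  exists2 j : {ffun 'I_N -> 'I_M}, nondecr j & exists p : 'S_N, forall i, f i = j (p i).
Proof.
pose key (i : 'I_N) := (f i * N + i)%N.
have keyM i i' : (f i < f i')%N -> (key i < key i')%N.
  move=> lt; rewrite /key.
  have h1 : (i < N)%N := ltn_ord i.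
  have h2 : (f i * N + N <= f i' * N)%N by rewrite addnC -mulSn leq_mul2r lt orbT.
  by apply: (leq_trans _ (leq_addr _ _)); apply: leq_trans h2; rewrite ltn_add2l.
have keyI i i' : key i = key i' -> i = i'.
  move=> e; apply: val_inj => /=.
  have := congr1 (modn^~ N) e; rewrite /key !modnMDl !modn_small //.
have keyT i i' : i != i' -> ((key i < key i') || (key i' < key i))%N.
  move=> ne; rewrite -neq_ltn; apply/eqP => /keyI/eqP; exact/negP.
pose rk (i : 'I_N) := #|[pred k | (key k < key i)%N]|.
have rk_lt i : (rk i < N)%N.
  apply: (@leq_trans #|[pred k : 'I_N | k != i]|.+1).
    by rewrite ltnS; apply: subset_leq_card; apply/subsetP => k /=; rewrite !inE;
       apply: contraTneq => ->; rewrite ltnn.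
  by rewrite cardC1 card_ord; case: (N) i => [[]|].
have rkM i i' : (key i < key i')%N -> (rk i < rk i')%N.
  move=> lt; apply: proper_card; apply/properP; split.
    by apply/subsetP => k; rewrite !inE => h; apply: ltn_trans h lt.
  by exists i; rewrite !inE ?ltnn.
pose r (i : 'I_N) := Ordinal (rk_lt i).
have r_inj : injective r.
  move=> i i' /(congr1 val) /= e; apply/eqP; apply: contraT => ne.
  by case/orP: (keyT _ _ ne) => /rkM; rewrite e ltnn.
pose p := perm r_inj.
exists [ffun a => f ((p^-1)%g a)]; last first.
  by exists p => i; rewrite ffunE permK.
apply/forallP => a; apply/forallP => b; apply/implyP => ab; rewrite !ffunE.
rewrite leqNgt; apply/negP => /keyM /rkM.
rewrite -[rk _]/(val (r _)) -[rk ((p^-1)%g a)]/(val (r _)). have rp x : r x = p x by rewrite permE.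
by rewrite !rp !permKV ltnNge ab.
Qed.


Theorem proposition1 (R : realDomainType) (N M : nat) (hN : (0 < N)%N) (hM : (0 < M)%N)
  (B : 'M[R]_(N, M)) (C : 'M[R]_(M, N)) :
  UP (uprod B C) =
  umax (@nondecr N M) (fun j : {ffun 'I_N -> 'I_M} => UP (colsub j B) + UP (rowsub j C)).
Proof.
pose k0 : 'I_M := Ordinal hM.
apply: le_anti; apply/andP; split.
- rewrite {1}/UP.
  case: (umax_ex (F := fun s : 'S_N => \sum_(i < N) uprod B C i (s i))
           (P := fun _ => true) (1%g) isT) => s _ ->.
  have hk i : exists k, uprod B C i (s i) = B i k + C k (s i).
    rewrite mxE; case: (umax_ex (F := fun k => B i k + C k (s i))
           (P := fun _ => true) (k0) isT) => k _ ->; by exists k.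
  have [f hf] := fin_all_exists hk.
  have [j jnd [p hp]] := sort_fun [ffun i => f i].
  apply: le_trans (umax_ub _ jnd).
  rewrite (eq_bigr (fun i => B i (j (p i)) + C (j (p i)) (s i))); last first.
    by move=> i _; rewrite hf -hp ffunE.
  rewrite big_split /=; apply: lerD.
  + apply: le_trans (umax_ub (F := fun s : 'S_N => \sum_(i < N) colsub j B i (s i)) (p) isT).
    by rewrite le_eqVlt; apply/orP; left; apply/eqP; apply: eq_bigr => i _; rewrite mxE.
  + apply: le_trans (umax_ub (F := fun s : 'S_N => \sum_(i < N) rowsub j C i (s i))
                        ((p^-1) * s)%g isT).
    rewrite [X in _ <= X](reindex_inj (@perm_inj _ p)) /=.
    rewrite le_eqVlt; apply/orP; left; apply/eqP; apply: eq_bigr => i _.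
    by rewrite mxE permM permK.
- case: (umax_ex (F := fun j : {ffun 'I_N -> 'I_M} => UP (colsub j B) + UP (rowsub j C))
           (P := @nondecr N M) ([ffun=> k0]) _); first by apply/forallP => a; apply/forallP => b; rewrite !ffunE leqnn implybT.
  move=> j _ ->; rewrite /UP.
  case: (umax_ex (F := fun s : 'S_N => \sum_(i < N) colsub j B i (s i))
           (P := fun _ => true) (1%g) isT) => p _ ->.
  case: (umax_ex (F := fun s : 'S_N => \sum_(i < N) rowsub j C i (s i))
           (P := fun _ => true) (1%g) isT) => t _ ->.
  apply: le_trans (umax_ub (F := fun s : 'S_N => \sum_(i < N) uprod B C i (s i))
                        ((p * t)%g) isT).
  rewrite [X in _ + X](reindex_inj (@perm_inj _ p)) /= -big_split /=.
  apply: ler_sum => i _; rewrite !mxE permM.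
  exact: (umax_ub (F := fun k => B i k + C k (t (p i))) (j (p i)) isT).
Qed.
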